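(* Let $k_1,k_2,b_1,b_2,b_3$ be non-zero constants with $b_1\neq b_2$, and let $$f(x,y)=k_1e^{\sqrt2[b_1x+(b_2-b_1)y]}+k_2e^{\frac{1}{\sqrt2}(b_1x+b_3y)}.$$ Consider the constrained system $\ddot x+\frac{f_{,x}}{f}\dot x^2=0$, $\ddot y+\frac{f_{,y}}{f}\dot y^2=0$, $f(x,y)\dot x\dot y=E_0\neq0$ (the non-null geodesics of the metric $\gamma_{12}=\gamma_{21}=f$, $\gamma_{11}=\gamma_{22}=0$). Then $$I_1=f(x,y)^2e^{-\sqrt2b_1x}\dot y^2+\frac{k_1b_1E_0}{b_1-b_2}e^{\sqrt2(b_2-b_1)y}$$ is a first integral of this constrained system.
   Context: A first integral of the constrained system is a function whose time derivative vanishes along every solution of the three displayed equations; the metric is considered where $f\neq0$. *)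

(* Defs.v *)
From Stdlib Require Import Reals.
From Coquelicot Require Import Coquelicot.
Open Scope R_scope.

Definition fmet (k1 k2 b1 b2 b3 : R) (x y : R) : R :=
  k1 * exp (sqrt 2 * (b1 * x + (b2 - b1) * y))
  + k2 * exp (/ sqrt 2 * (b1 * x + b3 * y)).

Definition fmet_x (k1 k2 b1 b2 b3 : R) (x y : R) : R :=
  Derive (fun u => fmet k1 k2 b1 b2 b3 u y) x.
Definition fmet_y (k1 k2 b1 b2 b3 : R) (x y : R) : R :=
  Derive (fun v => fmet k1 k2 b1 b2 b3 x v) y.

Definition I1 (k1 k2 b1 b2 b3 E0 : R) (x y xd yd : R) : R :=
  (fmet k1 k2 b1 b2 b3 x y) ^ 2 * exp (- (sqrt 2 * b1 * x)) * yd ^ 2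
  + k1 * b1 * E0 / (b1 - b2) * exp (sqrt 2 * (b2 - b1) * y).

(* Main.v *)
Require Import Defs.
From Stdlib Require Import Reals Lra.
From Coquelicot Require Import Coquelicot.
Open Scope R_scope.

Lemma fmet_y_eq k1 k2 b1 b2 b3 X Y :
  fmet_y k1 k2 b1 b2 b3 X Y =
  k1 * (sqrt 2 * (b2 - b1)) * exp (sqrt 2 * (b1 * X + (b2 - b1) * Y))
  + k2 * (/ sqrt 2 * b3) * exp (/ sqrt 2 * (b1 * X + b3 * Y)).
Proof.
  unfold fmet_y, fmet. apply is_derive_unique. auto_derive; [exact I| ring].
Qed.

Lemma alg (s k1 k2 b1 b2 b3 E0 EA EB Em Ey X' Y' Y'' : R) :
  s * s = 2 -> s <> 0 -> b1 - b2 <> 0 ->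
  Em * EA = Ey ->
  k1 * EA + k2 * EB <> 0 ->
  Y'' + (k1 * (s * (b2 - b1)) * EA + k2 * (/ s * b3) * EB) / (k1 * EA + k2 * EB) * Y' ^ 2 = 0 ->
  (k1 * EA + k2 * EB) * X' * Y' = E0 ->
  let g := k1 * EA + k2 * EB in
  let FX := k1 * (s * b1) * EA + k2 * (/ s * b1) * EB in
  let FY := k1 * (s * (b2 - b1)) * EA + k2 * (/ s * b3) * EB in
  2 * g * (FX * X' + FY * Y') * Em * Y'^2 + g^2 * Em * (-(s * b1 * X')) * Y'^2
  + g^2 * Em * 2 * Y' * Y'' + k1 * b1 * E0 / (b1 - b2) * Ey * s * (b2 - b1) * Y' = 0.
Proof.
  intros hs hs0 hb hE hg hY hc g FX FY.
  assert (HY : Y'' = - (FY / g) * Y' ^ 2).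
  { apply (Rplus_eq_reg_r (FY / g * Y' ^ 2)). unfold FY, g. rewrite hY. ring. }
  assert (K : 2 * FX - s * b1 * g = k1 * s * b1 * EA).
  { unfold FX, g. assert (/ s = s / 2).
    { replace (s / 2) with (s / (s * s)) by (rewrite hs; reflexivity). field. auto. }
    rewrite H. field_simplify. replace (s^2) with 2 by (simpl; lra). field. }
  transitivity (g * Em * Y'^2 * X' * (2 * FX - s * b1 * g)
     + k1 * b1 * E0 / (b1 - b2) * Ey * s * (b2 - b1) * Y').
  { rewrite HY. field. split; auto. }
  rewrite K, <- hE, <- hc. fold g. field. auto.
Qed.

Theorem mainTheorem10 (k1 k2 b1 b2 b3 E0 : R)
  (hk1 : k1 <> 0) (hk2 : k2 <> 0) (hb1 : b1 <> 0) (hb2 : b2 <> 0)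
  (hb3 : b3 <> 0) (hb12 : b1 <> b2) (hE0 : E0 <> 0)
  (a b : R) (x y : R -> R)
  (hdx : forall t, a < t < b -> ex_derive x t /\ ex_derive (Derive x) t)
  (hdy : forall t, a < t < b -> ex_derive y t /\ ex_derive (Derive y) t)
  (hf : forall t, a < t < b -> fmet k1 k2 b1 b2 b3 (x t) (y t) <> 0)
  (eqx : forall t, a < t < b ->
     Derive (Derive x) t
     + fmet_x k1 k2 b1 b2 b3 (x t) (y t) / fmet k1 k2 b1 b2 b3 (x t) (y t)
       * (Derive x t) ^ 2 = 0)
  (eqy : forall t, a < t < b ->
     Derive (Derive y) t
     + fmet_y k1 k2 b1 b2 b3 (x t) (y t) / fmet k1 k2 b1 b2 b3 (x t) (y t)
       * (Derive y t) ^ 2 = 0)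
  (constr : forall t, a < t < b ->
     fmet k1 k2 b1 b2 b3 (x t) (y t) * Derive x t * Derive y t = E0) :
  forall t, a < t < b ->
    is_derive (fun s => I1 k1 k2 b1 b2 b3 E0 (x s) (y s) (Derive x s) (Derive y s)) t 0.
Proof.
  intros t ht.
  destruct (hdx t ht) as [hx1 hx2]. destruct (hdy t ht) as [hy1 hy2].
  pose proof (hf t ht) as hft. pose proof (eqy t ht) as hey.
  pose proof (constr t ht) as hc.
  rewrite fmet_y_eq in hey. unfold fmet in hft, hey, hc.
  unfold I1, fmet. auto_derive.
  { repeat split; assumption. }
  change (fun x0 : R => x x0) with x. change (fun x0 : R => y x0) with y.
  change (fun x0 : R => Derive y x0) with (Derive y).
  assert (hs : sqrt 2 * sqrt 2 = 2) by (apply sqrt_sqrt; lra).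
  assert (hs0 : sqrt 2 <> 0) by (apply Rgt_not_eq, sqrt_lt_R0; lra).
  assert (hEm : exp (- (sqrt 2 * b1 * x t)) * exp (sqrt 2 * (b1 * x t + (b2 - b1) * y t))
                = exp (sqrt 2 * (b2 - b1) * y t)).
  { rewrite <- exp_plus. f_equal. ring. }
  assert (hb : b1 - b2 <> 0) by lra.
  pose proof (alg (sqrt 2) k1 k2 b1 b2 b3 E0 _ _ _ _ (Derive x t) (Derive y t)
     (Derive (Derive y) t) hs hs0 hb hEm hft hey hc) as H.
  simpl in H. rewrite <- H. ring.
Qed.
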